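(* Let $G$ be an interval graph (possibly colored) with at least one vertex. Then the underlying uncolored graph of $G_{\mathcal{M}}$ is a unit square graph.
   Context: An interval graph is an intersection graph of intervals on the real line. $\mathcal{M}(G)$ is the set of maximal cliques of $G$. $G_{\mathcal{M}}$ is the colored graph with vertex set $V(G)\sqcup\mathcal{M}(G)$, edge set $\{vC \mid C\in\mathcal{M}(G), v\in C\}\cup\{vw\mid v\ne w\in V(G)\}\cup\{CD\mid C\neq D\in\mathcal{M}(G)\}$, and coloring $c(v)=c_G(v)+1$ for $v\in V(G)$, $c(C)=1$ for $C\in\mathcal{M}(G)$. A unit square graph is a graph $H$ admitting $f\colon V(H)\to\mathbb{R}^2$ with $vw\in E(H)$ iff $\|f(v)-f(w)\|_\infty\le1$ for distinct $v,w$. *)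

(* Defs.v *)
From mathcomp Require Import all_boot.
From Stdlib Require Import Reals.
Set Implicit Arguments. Unset Strict Implicit. Unset Printing Implicit Defensive.

(* A (simple) graph on a finite vertex type V is given by an adjacency relation
   adj : rel V, assumed symmetric and irreflexive where needed. *)

Definition is_clique (V : finType) (adj : rel V) (C : {set V}) : bool :=
  [forall x in C, forall y in C, (x != y) ==> adj x y].

Definition is_max_clique (V : finType) (adj : rel V) (C : {set V}) : bool :=
  maxset (is_clique adj) C.

Definition interval_graph (V : finType) (adj : rel V) : Prop :=
  exists (l r : V -> R),
    (forall v, (l v <= r v)%R) /\
    (forall v w, v <> w -> (adj v w <-> ((l v <= r w)%R /\ (l w <= r v)%R))).

Definition max_clique_type (V : finType) (adj : rel V) :=
  {C : {set V} | is_max_clique adj C}.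

Definition GM_vertex (V : finType) (adj : rel V) : Type :=
  (V + max_clique_type adj)%type.

Definition GM_adj (V : finType) (adj : rel V) (x y : GM_vertex adj) : Prop :=
  match x, y with
  | inl v, inl w => v <> w
  | inr C, inr D => sval C <> sval D
  | inl v, inr C => v \in sval C
  | inr C, inl v => v \in sval C
  end.

Definition unit_square_graph (W : Type) (E : W -> W -> Prop) : Prop :=
  exists f : W -> (R * R),
    forall v w, v <> w ->
      (E v w <-> Rmax (Rabs (fst (f v) - fst (f w))) (Rabs (snd (f v) - snd (f w))) <= 1)%R.

(* Main.v *)
Require Import Defs.
From mathcomp Require Import all_boot.
From Stdlib Require Import Reals Lra.
From Stdlib Require Import IndefiniteDescription.

Definition phi (x : R) : R := (atan x / PI)%R.

Lemma phi_bound x : (- / 2 < phi x < / 2)%R.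
Proof.
  have := atan_bound x; have := PI_RGT_0; rewrite /phi => Hp [H1 H2].
  split.
  - apply (Rmult_lt_reg_r PI); first lra.
    rewrite /Rdiv Rmult_assoc Rinv_l; lra.
  - apply (Rmult_lt_reg_r PI); first lra.
    rewrite /Rdiv Rmult_assoc Rinv_l; lra.
Qed.

Lemma phi_le x y : (phi x <= phi y)%R <-> (x <= y)%R.
Proof.
  have Hp := PI_RGT_0. rewrite /phi; split => H.
  - destruct (Rle_dec x y) as [h|h]; first by [].
    exfalso. have h2 : (y < x)%R by lra.
    have := atan_increasing _ _ h2 => h3.
    have : (atan y / PI < atan x / PI)%R.
      apply Rmult_lt_compat_r; [apply Rinv_0_lt_compat; lra | lra].
    lra.
  - destruct (Req_dec x y) as [->|h]; first lra.
    have h2 : (x < y)%R by lra.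
    have := atan_increasing _ _ h2 => h3.
    have : (atan x / PI < atan y / PI)%R.
      apply Rmult_lt_compat_r; [apply Rinv_0_lt_compat; lra | lra].
    lra.
Qed.

Lemma small_dist a b : (- / 2 < a < / 2)%R -> (- / 2 < b < / 2)%R ->
  (Rabs (a - b) <= 1)%R.
Proof. move=> ha hb; unfold Rabs; destruct Rcase_abs; lra. Qed.

Lemma rmax_le1 x y : (Rmax x y <= 1)%R <-> (x <= 1 /\ y <= 1)%R.
Proof. unfold Rmax; destruct Rle_dec; split; try lra. Qed.

Lemma key_ineq a b c : (- / 2 < a < / 2)%R -> (- / 2 < b < / 2)%R ->
  (- / 2 < c < / 2)%R ->
  (Rmax (Rabs (a - (c - 1))) (Rabs (b - (c + 1))) <= 1)%R <-> (a <= c /\ c <= b)%R.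
Proof.
  move=> ha hb hc; rewrite rmax_le1; unfold Rabs;
  destruct Rcase_abs; destruct Rcase_abs; split; lra.
Qed.

Section Main.
Variables (V : finType) (adj : rel V).
Hypothesis adj_sym : symmetric adj.
Hypothesis adj_irr : irreflexive adj.

Lemma cliqueP (C : {set V}) :
  reflect (forall x y, x \in C -> y \in C -> x != y -> adj x y) (is_clique adj C).
Proof.
  apply: (iffP forall_inP) => H.
  - move=> x y xC yC nxy. have /forall_inP := H x xC => H2.
    by have /implyP := H2 y yC; apply.
  - move=> x xC; apply/forall_inP => y yC; apply/implyP; exact: H.
Qed.

Lemma ex_max (l : V -> R) (s : seq V) (x0 : V) : exists p,
  (l x0 <= p)%R /\ (forall u, u \in s -> l u <= p)%R /\
  (p = l x0 \/ exists2 u, u \in s & p = l u).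
Proof.
  elim: s => [|a s [p [H1 [H2 H3]]]].
  - by exists (l x0); split; [lra|split=> //; left].
  - exists (Rmax (l a) p); split; [|split].
    + apply: Rle_trans H1 (Rmax_r _ _).
    + move=> u; rewrite inE => /orP [/eqP->|us]; first by apply Rmax_l.
      apply: Rle_trans (H2 u us) (Rmax_r _ _).
    + unfold Rmax; destruct Rle_dec.
      * case: H3 => [->|[u us ->]]; first by left.
        by right; exists u => //; rewrite inE us orbT.
      * by right; exists a => //; rewrite inE eqxx.
Qed.


Variables (l r : V -> R).
Hypothesis Hlr : forall v, (l v <= r v)%R.
Hypothesis Hadj : forall v w, v <> w -> (adj v w <-> ((l v <= r w)%R /\ (l w <= r v)%R)).

Lemma clique_point (C : {set V}) (v0 : V) : is_max_clique adj C ->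
  exists p, forall v, v \in C <-> (l v <= p /\ p <= r v)%R.
Proof.
  move=> /maxsetP [/cliqueP Hcl Hmax].
  have [u0 u0C] : exists u0, u0 \in C.
    apply/set0Pn/negP => /eqP C0.
    have h : [set v0] = C.
      apply: Hmax; last by rewrite C0 sub0set.
      apply/cliqueP => x y; rewrite !inE => /eqP -> /eqP ->; by rewrite eqxx.
    by have := set11 v0; rewrite h C0 inE.
  have lr_in : forall u w, u \in C -> w \in C -> (l u <= r w)%R.
    move=> u w uC wC; case: (eqVneq u w) => [->|nuw]; first exact: Hlr.
    by have [] := (Hadj u w (elimN eqP nuw)).1 (Hcl _ _ uC wC nuw).
  have [p [H1 [H2 H3]]] := ex_max l (enum C) u0.
  have pr : forall y, y \in C -> (p <= r y)%R.
    move=> y yC; case: H3 => [->|[w]]; first exact: lr_in.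
    rewrite mem_enum => wC ->; exact: lr_in.
  have lp : forall y, y \in C -> (l y <= p)%R.
    by move=> y yC; apply: H2; rewrite mem_enum.
  exists p => v; split.
  - by move=> vC; split; [apply: lp | apply: pr].
  - move=> [h1 h2].
    have cl : is_clique adj (v |: C).
      apply/cliqueP => x y; rewrite !inE => /orP [/eqP->|xC] /orP [/eqP->|yC].
      + by rewrite eqxx.
      + move=> nvy; apply/(Hadj v y (elimN eqP nvy)); split.
        * exact: Rle_trans h1 (pr y yC).
        * exact: Rle_trans (lp y yC) h2.
      + move=> nxv; apply/(Hadj x v (elimN eqP nxv)); split.
        * exact: Rle_trans (lp x xC) h2.
        * exact: Rle_trans h1 (pr x xC).
      + exact: Hcl.
    have := Hmax _ cl (subsetUr _ _) => <-.
    by rewrite setU11.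
Qed.

End Main.

Theorem mainTheorem11 (V : finType) (adj : rel V)
  (adj_sym : symmetric adj) (adj_irr : irreflexive adj)
  (v0 : V) (Hint : interval_graph adj) :
  unit_square_graph (@GM_adj V adj).
Proof.
  case: Hint => l [r [Hlr Hadj]].
  have Hp : forall C : max_clique_type adj, exists p,
      forall v, v \in sval C <-> (l v <= p /\ p <= r v)%R.
    move=> C; exact: (@clique_point V adj l r Hlr Hadj (sval C) v0 (svalP C)).
  pose pC := fun C => proj1_sig (constructive_indefinite_description _ (Hp C)).
  have HpC : forall (C : max_clique_type adj) v, v \in sval C <-> (l v <= pC C /\ pC C <= r v)%R.
    move=> C; exact: (proj2_sig (constructive_indefinite_description _ (Hp C))).
  exists (fun x => match x with
                   | inl v => (phi (l v), phi (r v))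
                   | inr C => (phi (pC C) - 1, phi (pC C) + 1)%R end).
  move=> [v|C] [w|D] /= nxy.
  - split=> [_|_ e]; last by apply: nxy; rewrite e.
    apply rmax_le1; split; apply: small_dist; exact: phi_bound.
  - rewrite key_ineq; try exact: phi_bound.
    rewrite HpC !phi_le; tauto.
  - rewrite Rabs_minus_sym (Rabs_minus_sym (_ + 1)) key_ineq; try exact: phi_bound.
    rewrite HpC !phi_le; tauto.
  - split=> _.
    + rewrite rmax_le1; split.
      * replace (phi (pC C) - 1 - (phi (pC D) - 1))%R with (phi (pC C) - phi (pC D))%R by ring.
        apply: small_dist; exact: phi_bound.
      * replace (phi (pC C) + 1 - (phi (pC D) + 1))%R with (phi (pC C) - phi (pC D))%R by ring.
        apply: small_dist; exact: phi_bound.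
    + move=> e; apply: nxy; congr inr; exact: val_inj.
Qed.
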